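(* Let $N\ge1$, let $\mathbf{K}\in\mathbb{R}^{N\times N}$ be the cyclic shift matrix ($(\mathbf{K}\mathbf{x})_1=x_N$, $(\mathbf{K}\mathbf{x})_i=x_{i-1}$ for $i\ge2$), so $\mathbf{K}^{-1}=\mathbf{K}^T$, let $\mathbf{K}(\nu)=(1-\nu)\mathbf{I}+\nu\mathbf{K}$, and $\mathbf{L}_h=N^2(\mathbf{K}+\mathbf{K}^T-2\mathbf{I})$. For $\tilde\nu\in\mathbb{R}$ with integer part $s=\lfloor\tilde\nu\rfloor$ and fractional part $\nu=\tilde\nu-s$, define $\mathcal{K}(\tilde\nu)=\mathbf{K}^s\mathbf{K}(\nu)$ (with $\mathbf{K}^s=(\mathbf{K}^T)^{-s}$ for $s<0$). Let $\tilde\nu,\tilde\omega\in\mathbb{R}$ with fractional parts $\nu=\tilde\nu-\lfloor\tilde\nu\rfloor$, $\omega=\tilde\omega-\lfloor\tilde\omega\rfloor$. Then (a) $\mathcal{K}(\tilde\nu)\mathcal{K}(\tilde\omega)=\mathcal{K}(\tilde\omega)\mathcal{K}(\tilde\nu)$; (b) $\mathcal{K}(\tilde\nu)\mathcal{K}(\tilde\omega)^T=\mathcal{K}(\tilde\omega)^T\mathcal{K}(\tilde\nu)$; (c) if $0\le\nu,\omega\le1$ and $\nu+\omega\le1$, then $\mathcal{K}(\tilde\nu)\mathcal{K}(\tilde\omega)=\mathcal{K}(\tilde\nu+\tilde\omega)+\frac{1}{N^2}\mathbf{C}$, where $\mathbf{C}$ is a scalar multiple of a shifted discrete Laplacian $\mathbf{K}^m\mathbf{L}_h$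 for some integer $m$; (d) for every $\mathbf{u}\in\mathbb{R}^N$, $\sum_{j=1}^N u_j=\sum_{j=1}^N(\mathcal{K}(\tilde\nu)\mathbf{u})_j$.
   Context: $\mathbf{I}$ is the $N\times N$ identity; $\mathcal{K}(\tilde\nu)$ is an upwind-type (large time-step) transport by a real shift $\tilde\nu$: an integer cyclic shift followed by linear interpolation between neighbouring cells. *)

(* Defs.v *)
From HB Require Import structures.
From mathcomp Require Import all_boot all_order all_algebra.
From mathcomp Require Import reals.
Set Implicit Arguments. Unset Strict Implicit. Unset Printing Implicit Defensive.
Import Order.TTheory GRing.Theory Num.Theory.
Local Open Scope ring_scope.

Section Defs.
Variables (R : realType) (N : nat).

Definition Kshift : 'M[R]_N :=
  \matrix_(i < N, j < N) (((i : nat) == (j.+1 %% N)%N)%:R : R).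

Definition mxpow (A : 'M[R]_N) (k : nat) : 'M[R]_N := iter k (fun B => A *m B) 1%:M.

Definition Kpow (s : int) : 'M[R]_N :=
  match s with
  | Posz k => mxpow Kshift k
  | Negz k => mxpow Kshift^T k.+1
  end.

Definition Knu (nu : R) : 'M[R]_N := (1 - nu)%:M + nu *: Kshift.

Definition fracpart (x : R) : R := x - (Num.floor x)%:~R.

Definition Kcal (nt : R) : 'M[R]_N := Kpow (Num.floor nt) *m Knu (fracpart nt).

Definition Lh : 'M[R]_N := ((N%:R : R) ^+ 2) *: (Kshift + Kshift^T - 2%:M).

End Defs.

(* Main.v *)
Set Warnings "-notation-overridden -ambiguous-paths".
Require Import Defs.
From HB Require Import structures.
From mathcomp Require Import all_boot all_order all_algebra.
From mathcomp Require Import reals.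
From mathcomp Require Import all_fingroup ring lra.
Import Order.TTheory GRing.Theory Num.Theory.
Local Open Scope ring_scope.

Section S.
Variables (R : realType) (n : nat).
Local Notation N := n.+1.
Local Notation S := (Kshift R N).
Local Notation T := ((Kshift R N)^T).

Definition sig : 'S_n.+1 := perm (@ordS_inj N).

Lemma S_perm : S = perm_mx sig^-1.
Proof.
apply/matrixP => i j; rewrite !mxE.
congr (_%:R); congr nat_of_bool.
rewrite -(inj_eq (@perm_inj _ sig)) permKV permE; rewrite eq_sym; apply/eqP/eqP => [H|->]; [exact: val_inj|by []].
Qed.

Lemma T_perm : T = perm_mx sig.
Proof. by rewrite S_perm tr_perm_mx invgK. Qed.

Lemma ST : S * T = 1.
Proof. by rewrite T_perm S_perm -mulmxE -perm_mxM mulVg perm_mx1. Qed.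

Lemma TS : T * S = 1.
Proof. by rewrite T_perm S_perm -mulmxE -perm_mxM mulgV perm_mx1. Qed.

Lemma S_unit : S \is a GRing.unit.
Proof. by apply/unitrP; exists T; rewrite ST TS. Qed.

Lemma S_inv : S^-1 = T.
Proof. by rewrite -[S^-1]mulr1 -ST mulKr // S_unit. Qed.

Lemma mxpowE (A : 'M[R]_N) k : mxpow A k = A ^+ k.
Proof. elim: k => [|k IH]; first by rewrite /mxpow /= expr0 idmxE. rewrite /mxpow /= -/(mxpow A k) IH exprS mulmxE; reflexivity. Qed.

Lemma KpowE z : Kpow R N z = S ^ z.
Proof.
case: z => k; rewrite /Kpow mxpowE //.
by rewrite -S_inv exprVn.
Qed.


Local Notation hm := (horner_mx S).

Lemma KnuE x : Knu N x = hm ((1-x)%:P + x%:P * 'X).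
Proof.
by rewrite rmorphD rmorphM /= !horner_mx_C horner_mx_X -mulmxE mul_scalar_mx.
Qed.

Lemma LapE : S * (S + T - 2%:M) = hm ('X * 'X + 1 - 2%:P * 'X).
Proof.
have h2 : hm (2%:P * 'X) = 2%:M * S by rewrite rmorphM /= horner_mx_C horner_mx_X.
have h1 : hm ('X*'X + 1) = S*S + 1 by rewrite rmorphD rmorphM rmorph1 /= horner_mx_X.
transitivity (hm ('X*'X + 1) - hm (2%:P * 'X)); last by rewrite rmorphB.
have e : S * 2%:M = 2%:M * S by apply: scalar_mxC.
by rewrite h1 h2 mulrBr mulrDr ST e.
Qed.

Lemma core x y :
  Knu N x * Knu N y = Knu N (x + y) + (x * y) *: (S * (S + T - 2%:M)).
Proof.
rewrite LapE !KnuE -mul_scalar_mx mulmxE -(horner_mx_C S) -!(rmorphM hm) -(rmorphD hm).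
congr (hm _); ring.
Qed.


Definition C1 (A : 'M[R]_N) := GRing.comm A S /\ GRing.comm A T.
Definition C2 (B : 'M[R]_N) := forall A, C1 A -> GRing.comm A B.

Lemma C2_S : C2 S. Proof. by move=> A []. Qed.
Lemma C2_T : C2 T. Proof. by move=> A []. Qed.
Lemma C2_scal a : C2 a%:M.
Proof. by move=> A _; rewrite /GRing.comm -!mulmxE scalar_mxC. Qed.
Lemma C2_D A B : C2 A -> C2 B -> C2 (A + B).
Proof. by move=> hA hB C hC; apply: commrD; [apply: hA|apply: hB]. Qed.
Lemma C2_M A B : C2 A -> C2 B -> C2 (A * B).
Proof. by move=> hA hB C hC; apply: commrM; [apply: hA|apply: hB]. Qed.
Lemma C2_X A k : C2 A -> C2 (A ^+ k).
Proof. by move=> hA C hC; apply: commrX; apply: hA. Qed.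
Lemma C2_Z a B : C2 B -> C2 (a *: B).
Proof. by move=> hB; rewrite -mul_scalar_mx mulmxE; apply: C2_M => //; apply: C2_scal. Qed.

Lemma C1_S : C1 S. Proof. by split=> //; rewrite /GRing.comm ST TS. Qed.
Lemma C1_T : C1 T. Proof. by split=> //; rewrite /GRing.comm ST TS. Qed.

Lemma C2_C1 B : C2 B -> C1 B.
Proof. by move=> hB; split; apply/commr_sym; apply: hB; [apply: C1_S|apply: C1_T]. Qed.

Lemma C2_comm A B : C2 A -> C2 B -> GRing.comm A B.
Proof. by move=> hA hB; apply: hB; apply: C2_C1. Qed.

Lemma tr_exp (A : 'M[R]_N) k : (A ^+ k)^T = A^T ^+ k.
Proof.
elim: k => [|k IH]; first by rewrite !expr0 trmx1.
by rewrite exprSr -mulmxE trmx_mul IH mulmxE exprS.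
Qed.

Lemma C2_Knu x : C2 (Knu N x).
Proof. by apply: C2_D; [apply: C2_scal|apply: C2_Z; apply: C2_S]. Qed.

Lemma Knu_tr x : (Knu N x)^T = (1 - x)%:M + x *: T.
Proof. by rewrite /Knu linearD /= tr_scalar_mx linearZ. Qed.

Lemma C2_Knu_tr x : C2 (Knu N x)^T.
Proof. by rewrite Knu_tr; apply: C2_D; [apply: C2_scal|apply: C2_Z; apply: C2_T]. Qed.

Lemma C2_Kpow z : C2 (Kpow R N z).
Proof. by case: z => k; rewrite /Kpow mxpowE; apply: C2_X; [apply: C2_S|apply: C2_T]. Qed.

Lemma C2_Kpow_tr z : C2 (Kpow R N z)^T.
Proof.
by case: z => k; rewrite /Kpow mxpowE tr_exp ?trmxK; apply: C2_X; [apply: C2_T|apply: C2_S].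
Qed.

Lemma C2_Kcal x : C2 (Kcal N x).
Proof. by rewrite /Kcal mulmxE; apply: C2_M; [apply: C2_Kpow|apply: C2_Knu]. Qed.

Lemma C2_Kcal_tr x : C2 (Kcal N x)^T.
Proof. by rewrite /Kcal trmx_mul mulmxE; apply: C2_M; [apply: C2_Knu_tr|apply: C2_Kpow_tr]. Qed.

Local Notation e := (const_mx 1 : 'rV[R]_N).

Lemma eS : e *m S = e.
Proof.
rewrite S_perm -[(sig^-1)%g]invgK -col_permE; apply/matrixP => i j; by rewrite !mxE.
Qed.

Lemma eT : e *m T = e.
Proof. by rewrite -{1}eS -mulmxA mulmxE ST mulmx1. Qed.

Lemma e_pow (A : 'M[R]_N) k : e *m A = e -> e *m mxpow A k = e.
Proof.
move=> h; elim: k => [|k IH]; first by rewrite /mxpow /= mulmx1.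
by rewrite /mxpow /= -/(mxpow A k) mulmxA h IH.
Qed.

Lemma eKcal x : e *m Kcal N x = e.
Proof.
rewrite /Kcal mulmxA.
have -> : e *m Kpow R N (Num.floor x) = e.
  by case: (Num.floor x) => k; apply: e_pow; [apply: eS|apply: eT].
by rewrite /Knu mulmxDr mul_mx_scalar -scalemxAr eS -scalerDl subrK scale1r.
Qed.

Lemma sum_e (u : 'cV[R]_N) : \sum_(j < N) u j 0 = (e *m u) 0 0.
Proof. by rewrite mxE; apply: eq_bigr => j _; rewrite mxE mul1r. Qed.

End S.
Lemma fl_sum (R : realType) (nt wt : R) :
  let nu := fracpart nt in let om := fracpart wt in
  0 <= nu -> 0 <= om -> nu + om <= 1 ->
  (Num.floor (nt + wt) = Num.floor nt + Num.floor wt /\ fracpart (nt + wt) = nu + om) \/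
  (Num.floor (nt + wt) = Num.floor nt + Num.floor wt + 1 /\ fracpart (nt + wt) = 0 /\ nu + om = 1).
Proof.
move=> nu om h1 h2 h3.
have E : nt + wt = (nu + om) + (Num.floor nt + Num.floor wt)%:~R.
  by rewrite /nu /om /fracpart intrD; ring.
have F : Num.floor (nt + wt) = Num.floor (nu + om) + (Num.floor nt + Num.floor wt).
  by rewrite E floorDrz ?intr_int // intrKfloor.
case: (ltrP (nu + om) 1) => h4.
  left; have F0 : Num.floor (nu + om) = 0 by apply: floor_def; rewrite add0r addr_ge0.
  rewrite F F0 add0r; split => //.
  by rewrite /fracpart F F0 add0r E; ring.
have e1 : nu + om = 1 by apply/eqP; rewrite eq_le h3 h4.
right; rewrite F e1 floor1 addrC; split => //; split => //.
by rewrite /fracpart F e1 floor1 E e1 intrD; ring.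
Qed.

Theorem lemma3p3 (R : realType) (N : nat) (hN : (0 < N)%N) (nt wt : R) :
  let nu := fracpart nt in
  let om := fracpart wt in
  [/\ Kcal N nt *m Kcal N wt = Kcal N wt *m Kcal N nt,
      Kcal N nt *m (Kcal N wt)^T = (Kcal N wt)^T *m Kcal N nt,
      (0 <= nu <= 1 -> 0 <= om <= 1 -> nu + om <= 1 ->
        exists (c : R) (m : int),
          Kcal N nt *m Kcal N wt =
            Kcal N (nt + wt) + (1 / (N%:R ^+ 2)) *: (c *: (Kpow R N m *m Lh R N)))
    & forall u : 'cV[R]_N,
        \sum_(j < N) u j 0 = \sum_(j < N) (Kcal N nt *m u) j 0].
Proof.
case: N hN => [//|n] _ nu om.
split.
- by rewrite mulmxE; apply: C2_comm; apply: C2_Kcal.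
- by rewrite mulmxE; apply: C2_comm; [apply: C2_Kcal|apply: C2_Kcal_tr].
- move=> /andP[h1 _] /andP[h2 _] h3.
  exists (nu * om), (Num.floor nt + Num.floor wt + 1).
  set s1 := Num.floor nt; set s2 := Num.floor wt.
  have key : Kcal n.+1 (nt + wt) = Kshift R n.+1 ^ (s1 + s2) * Knu n.+1 (nu + om).
    rewrite /Kcal KpowE mulmxE.
    case: (@fl_sum R nt wt h1 h2 h3) => [[-> ->] //|[-> [-> ->]]].
    rewrite exprzDr ?S_unit // expr1z -mulrA; congr (_ * _).
    by rewrite /Knu subr0 scale0r addr0 subrr scale1r raddf0 add0r mulr1.
  rewrite key /Kcal !KpowE !mulmxE -/s1 -/s2.
  rewrite -/nu -/om.
  have cm : GRing.comm (Knu n.+1 nu) (Kshift R n.+1 ^ s2).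
    by apply: C2_comm; [apply: C2_Knu|rewrite -KpowE; apply: C2_Kpow].
  rewrite mulrA -(mulrA _ (Knu n.+1 nu)) cm mulrA -exprzDr ?S_unit // -mulrA core.
  rewrite /Lh -scalerAr !scalerA.
  have hN : (n.+1%:R : R) != 0 by rewrite pnatr_eq0.
  have -> : 1 / n.+1%:R ^+ 2 * (nu * om) * n.+1%:R ^+ 2 = nu * om :> R.
    by rewrite mulrAC div1r mulVf ?mul1r // expf_neq0.
  rewrite (exprzDr (S_unit R n) (s1 + s2) 1) expr1z mulrDr scalerAr mulrA scalerAr; reflexivity.
- by move=> u; rewrite !sum_e mulmxA eKcal.
Qed.
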